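(* Let $h\in\mathbb{F}[x]$ with $\deg h\ge1$ and $\mathcal{A}=\mathrm{Aut}_{\mathbb{F}}(A_h)$. Then $A_h^{\mathcal{A}}=\mathbb{F}[x]^{\mathcal{A}}$, and: (i) if $\mathcal{A}=\{\phi_f:f\in\mathbb{F}[x]\}$ then $\mathbb{F}[x]^{\mathcal{A}}=\mathbb{F}[x]$; if $\mathcal{A}=\{\phi_f\}\rtimes\tau_{\mathbb{P}}$ with $\tau_{\mathbb{P}}\cong\mathbb{F}^*$ (i.e. $h=\gamma(x-\lambda)^n$ with $\lambda\in\mathbb{F}$) and $\mathbb{F}$ is infinite, then $\mathbb{F}[x]^{\mathcal{A}}=\mathbb{F}$; (ii) $\mathbb{F}[x]^{\mathcal{A}}=\mathbb{F}[t]$ where: (a) if $\tau_{\mathbb{P}}=\tau_{1,\mathbb{G}}$, then $t(x)=\prod_{\nu\in\mathbb{G}}(x+\nu)$; (b) if $\tau_{\mathbb{P}}=\tau_{1,\mathbb{G}}\rtimes\langle\tau_{\alpha,\beta}\rangle$ with $\alpha$ a primitive $\ell$-th root of unity for some $\ell>1$, then $t(x)=\prod_{\nu\in\mathbb{G}}\left(x+\frac{\beta}{\alpha-1}+\nu\right)^{\ell}$.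
   Context: $\mathbb{F}$ is an arbitrary field. For $h\in\mathbb{F}[x]$, $A_h$ is the unital associative $\mathbb{F}$-algebra generated by $x,\hat y$ with defining relation $\hat yx-x\hat y=h$. For a group $\mathcal{A}$ of automorphisms and a subalgebra $S$, $S^{\mathcal{A}}=\{s\in S:\omega(s)=s\ \forall\omega\in\mathcal{A}\}$. Let $\mathbb{P}=\{(\alpha,\beta)\in\mathbb{F}^*\times\mathbb{F}: h(\alpha x+\beta)=\alpha^{\deg h}h(x)\}$; for $(\alpha,\beta)\in\mathbb{P}$, $\tau_{\alpha,\beta}$ is the automorphism of $A_h$ with $x\mapsto\alpha x+\beta$, $\hat y\mapsto\alpha^{\deg h-1}\hat y$; $\tau_{\mathbb{P}}=\{\tau_{\alpha,\beta}\}$. For $f\in\mathbb{F}[x]$, $\phi_f$ is the automorphism with $x\mapsto x$, $\hat y\mapsto\hat y+f$. It is known that $\mathcal{A}=\{\phi_f\}\rtimes\tau_{\mathbb{P}}$. $\mathbb{G}=\{\nu\in\mathbb{F}:(1,\nu)\in\mathbb{P}\}$, a finite additive subgroup, and $\tau_{1,\mathbb{G}}=\{\tau_{1,\nu}:\nu\in\mathbb{G}\}$. *)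

(* Defs.v *)
From HB Require Import structures.
From mathcomp Require Import all_boot all_order all_algebra.
Set Implicit Arguments. Unset Strict Implicit. Unset Printing Implicit Defensive.
Import GRing.Theory.
Local Open Scope ring_scope.

(* Model of A_h: the Ore extension F[x][yhat; delta], delta = h * d/dx.
   An element  \sum_j g_j(x) yhat^j  (normal form, coefficients on the left)
   is represented by the polynomial  \sum_j g_j%:P * 'X^j : {poly {poly F}}
   (outer variable 'X = yhat, inner variable = x).  By the PBW theorem this
   is a bijection with A_h; multiplication is given by the rule
   yhat^i g = \sum_m 'C(i,m) delta^m(g) yhat^(i-m). *)
Section Ah.
Variable F : fieldType.
Variable h : {poly F}.

Definition AH := {poly {poly F}}.

Definition deltaH (g : {poly F}) : {poly F} := h * g^`().

Definition mulA (a b : AH) : AH :=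
  \sum_(i < size a) \sum_(j < size b) \sum_(m < i.+1)
     ((a`_i * iter m deltaH b`_j) *+ 'C(i, m)) *: 'X^(i - m + j).

Definition powA (v : AH) (n : nat) : AH := iter n (mulA v) 1.

(* The algebra endomorphism of A_h with x |-> u (in F[x]) and yhat |-> v. *)
Definition substA (u : {poly F}) (v : AH) (a : AH) : AH :=
  \sum_(i < size a) mulA ((a`_i \Po u)%:P) (powA v i).

Definition phiA (f : {poly F}) : AH -> AH := substA 'X ('X + f%:P).

Definition inP (al be : F) : bool :=
  (al != 0) && (h \Po (al *: 'X + be%:P) == al ^+ (size h).-1 *: h).

(* tau_{alpha,beta} : x |-> alpha x + beta, yhat |-> alpha^(deg h - 1) yhat *)
Definition tauA (al be : F) : AH -> AH :=
  substA (al *: 'X + be%:P) ((al ^+ (size h).-2)%:P *: 'X).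

Definition fixedA (a : AH) : Prop :=
  (forall f, phiA f a = a) /\ (forall al be, inP al be -> tauA al be a = a).

End Ah.

(* composition of affine pairs: tau_p \o tau_q = tau_(acomp p q) *)
Definition acomp (F : fieldType) (p q : F * F) : F * F :=
  (p.1 * q.1, q.1 * p.2 + q.2).
Definition apow (F : fieldType) (p : F * F) (k : nat) : F * F :=
  iter k (acomp p) (1, 0).

(* Main.v *)
Require Import Defs.
From HB Require Import structures.
From mathcomp Require Import all_boot all_order all_algebra.
From mathcomp Require Import zify ring.
From Stdlib Require Import Classical.
Import GRing.Theory.
Local Open Scope ring_scope.
Section S.
Context {F : fieldType}.
Variable h : {poly F}.

Lemma mulA_C1 (c : {poly F}) : Defs.mulA h (c%:P) 1 = c%:P.
Proof.
rewrite /Defs.mulA size_poly1 size_polyC.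
have [->|cn0] := eqVneq c 0; first by rewrite big_ord0.
rewrite big_ord1 big_ord1 big_ord1 /= coefC coef1 /= mulr1 expr0.
by rewrite alg_polyC.
Qed.

Lemma substA_C u v (g : {poly F}) : substA h u v g%:P = (g \Po u)%:P.
Proof.
rewrite /substA size_polyC.
have [->|gn0] := eqVneq g 0; first by rewrite big_ord0 comp_poly0.
by rewrite big_ord1 coefC /= mulA_C1.
Qed.

Lemma fixedC (g : {poly F}) :
  fixedA h g%:P <-> (forall al be, inP h al be -> g \Po (al *: 'X + be%:P) = g).
Proof.
rewrite /fixedA /phiA /tauA; split.
  by case=> _ H al be /H; rewrite substA_C => /polyC_inj.
move=> H; split=> [f|al be /H hP]; rewrite substA_C ?comp_polyXr //.
by rewrite hP.
Qed.

Lemma iter_delta0 i : iter i (deltaH h) 0 = 0.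
Proof. by elim: i => //= i ->; rewrite /deltaH deriv0 mulr0. Qed.

Lemma coef0_mulA (a b : AH F) :
  (Defs.mulA h a b)`_0 = \sum_(i < size a) a`_i * iter i (deltaH h) b`_0.
Proof.
rewrite /Defs.mulA coef_sum; apply: eq_bigr => i _; rewrite coef_sum.
case sb: (size b) => [|n].
  move/eqP: sb; rewrite size_poly_eq0 => /eqP ->.
  by rewrite big_ord0 coef0 iter_delta0 mulr0.
rewrite big_ord_recl [X in _ + X]big1 ?addr0; last first.
  move=> j _; rewrite coef_sum big1 // => m _ /=.
  by rewrite coefZ coefXn /= addnS mulr0.
rewrite coef_sum big_ord_recr /= big1 ?add0r; last first.
  move=> m _; rewrite coefZ coefXn addn0 eq_sym subn_eq0 /=.
  by rewrite leqNgt ltn_ord /= mulr0.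
by rewrite subnn coefZ coefXn /= binn mulr1n mulr1.
Qed.

Lemma coef0_mulC (c : {poly F}) b : (Defs.mulA h c%:P b)`_0 = c * b`_0.
Proof.
rewrite coef0_mulA size_polyC.
have [->|cn0] := eqVneq c 0; first by rewrite big_ord0 mul0r.
by rewrite big_ord1 coefC.
Qed.

Definition cseq (f : {poly F}) i := iter i (fun c => f * c + deltaH h c) 1.

Lemma coef0_pow f i : (powA h ('X + f%:P) i)`_0 = cseq f i.
Proof.
elim: i => [|i IH]; first by rewrite /powA /= coef1.
rewrite /powA iterS -/(powA h _ i) coef0_mulA size_XaddC.
rewrite big_ord_recr big_ord1 /= IH.
by rewrite !coefD !coefX !coefC /= add0r addr0 mul1r.
Qed.

Lemma coef0_phi f a : (phiA h f a)`_0 = \sum_(i < size a) a`_i * cseq f i.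
Proof.
rewrite /phiA /substA coef_sum; apply: eq_bigr => i _.
by rewrite comp_polyXr coef0_mulC coef0_pow.
Qed.

Lemma cseq_Xn k i : (size h <= k)%N ->
  cseq ('X^k) i \is monic /\ size (cseq ('X^k) i) = (i * k).+1.
Proof.
move=> hk; elim: i => [|i [m sz]].
  by rewrite /cseq /= monic1 size_poly1.
rewrite /cseq iterS -/(cseq _ i).
set c := cseq _ i in m sz *.
have cn0 : c != 0 by rewrite -size_poly_eq0 sz.
have s1 : size ('X^k * c) = (k + (i * k).+1)%N by rewrite mulrC size_mulXn // sz.
have s2 : (size (deltaH h c) < size ('X^k * c)%R)%N.
  rewrite s1 /deltaH; apply: leq_ltn_trans (size_mul_leq _ _) _.
  have := lt_size_deriv cn0; rewrite sz; lia.
split.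
  by rewrite monicE lead_coefDl // lead_coef_monicM ?monicXn // -monicE.
by rewrite size_polyDl // s1; lia.
Qed.

Lemma fixed_size a : (forall f, phiA h f a = a) -> (size a <= 1)%N.
Proof.
move=> H; rewrite leqNgt; apply/negP => ha.
set k := (size h + \sum_(i < size a) size (a`_i)%R).+1%N.
have hk : (size h <= k)%N by rewrite /k; lia.
have hai : forall i, (size (a`_i)%R < k)%N.
  move=> i; case: (ltnP i (size a)) => hi; last first.
    by rewrite nth_default // size_poly0.
  rewrite /k (bigD1 (Ordinal hi)) //=; lia.
have := congr1 (fun p : AH F => p`_0) (H ('X^k)); rewrite coef0_phi /=.
have a0 : lead_coef a != 0.
  by rewrite lead_coef_eq0 -size_poly_eq0; case: (size a) ha.
move: a0; rewrite lead_coefE.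
case Hs: (size a) ha => [|n] //; rewrite ltnS => n1 an0.
rewrite big_ord_recr /=.
have [mn sn] := cseq_Xn k n hk.
have sQ : size (a`_n * cseq ('X^k) n) = (size (a`_n)%R + n * k)%N.
  by rewrite size_Mmonic // sn addnS.
have sS : (size (\sum_(i < n) a`_i * cseq ('X^k) i)%R < n * k)%N.
  apply: (big_ind (fun p : {poly F} => (size p < n * k)%N)).
  - by rewrite size_poly0; nia.
  - move=> p q hp hq; apply: leq_ltn_trans (size_polyD _ _) _.
    by rewrite gtn_max hp hq.
  move=> i _; apply: leq_ltn_trans (size_mul_leq _ _) _.
  have [_ si] := cseq_Xn k i hk; rewrite si.
  have := hai i; have := ltn_ord i; nia.
rewrite addrC => E.
have : size (a`_n * cseq ('X^k) n + \sum_(i < n) a`_i * cseq ('X^k) i)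
       = size (a`_0) by rewrite E.
rewrite size_polyDl ?sQ; last by apply: leq_trans sS _; rewrite leq_addl.
have := hai 0%N; have : (0 < size (a`_n)%R)%N by rewrite size_poly_gt0.
nia.
Qed.
End S.
Set Implicit Arguments.
Unset Strict Implicit.
Section P.
Context {F : fieldType}.
Implicit Types p q g : {poly F}.

Definition lin (a b : F) : {poly F} := a *: 'X + b%:P.

Lemma lin_comp a b c d : lin a b \Po lin c d = lin (a * c) (a * d + b).
Proof.
by rewrite /lin comp_polyD comp_polyZ comp_polyX comp_polyC scalerDr scalerA
  scale_polyC polyCD addrA.
Qed.

Lemma linX b : 'X + b%:P = lin 1 b. Proof. by rewrite /lin scale1r. Qed.
Lemma linZ a : a *: 'X = lin a 0. Proof. by rewrite /lin addr0. Qed.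
Lemma comp_lin10 p : p \Po lin 1 0 = p.
Proof. by rewrite /lin scale1r addr0 comp_polyXr. Qed.

Lemma lin_cancel a b p q : a != 0 -> p \Po lin a b = q \Po lin a b -> p = q.
Proof.
move=> a0 E.
have e : lin 1 0 = lin a b \Po lin a^-1 (- (a^-1 * b)).
  by rewrite lin_comp divff // mulrN mulrA divff // mul1r addNr.
by rewrite -[p]comp_lin10 -[q]comp_lin10 e !comp_polyA E.
Qed.

Lemma size_lin a b : a != 0 -> size (lin a b) = 2.
Proof.
move=> a0; rewrite /lin size_polyDl size_scale // ?size_polyX //.
by apply: leq_ltn_trans (size_polyC_leq1 _) _.
Qed.

Lemma lead_lin a b : a != 0 -> lead_coef (lin a b) = a.
Proof.
move=> a0; rewrite /lin lead_coefDl ?lead_coefZ ?lead_coefX ?mulr1 //.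
rewrite size_scale // size_polyX.
by apply: leq_ltn_trans (size_polyC_leq1 _) _.
Qed.

Lemma horner_lin a b x : (lin a b).[x] = a * x + b.
Proof. by rewrite /lin hornerD hornerZ hornerX hornerC. Qed.

Lemma comp_prod (I : Type) (s : seq I) (G : I -> {poly F}) q :
  (\prod_(i <- s) G i) \Po q = \prod_(i <- s) (G i \Po q).
Proof.
elim: s => [|x s IH]; first by rewrite !big_nil -polyC1 comp_polyC.
by rewrite !big_cons comp_polyM IH.
Qed.

Lemma comp_exp p q n : (p ^+ n) \Po q = (p \Po q) ^+ n.
Proof.
elim: n => [|n IH]; first by rewrite !expr0 -polyC1 comp_polyC.
by rewrite !exprS comp_polyM IH.
Qed.

Lemma prod_scale (I : Type) (s : seq I) (G : I -> {poly F}) a :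
  \prod_(i <- s) (a *: G i) = a ^+ size s *: \prod_(i <- s) G i.
Proof.
elim: s => [|x s IH]; first by rewrite !big_nil expr0 scale1r.
by rewrite !big_cons IH /= exprS -scalerAl -scalerAr scalerA.
Qed.

Definition Tp (s : seq F) := \prod_(nu <- s) ('X + nu%:P).

Lemma Tp_comp_lin s a b : Tp s \Po lin a b = \prod_(nu <- s) lin a (b + nu).
Proof.
rewrite /Tp comp_prod; apply: eq_bigr => nu _.
by rewrite linX lin_comp mul1r mul1r.
Qed.

Lemma Tp_XsubC s : Tp s = \prod_(nu <- s) ('X - (- nu)%:P).
Proof. by apply: eq_bigr => nu _; rewrite polyCN opprK. Qed.

Lemma Tp_monic s : Tp s \is monic.
Proof. by rewrite Tp_XsubC monic_prod_XsubC. Qed.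

Lemma size_Tp s : size (Tp s) = (size s).+1.
Proof. by rewrite Tp_XsubC size_prod_XsubC. Qed.

Lemma perm_map_sub (s : seq F) (f : F -> F) : uniq s -> injective f ->
  {in s, forall x, f x \in s} -> perm_eq (map f s) s.
Proof.
move=> us fi fs; apply: uniq_perm; rewrite ?map_inj_uniq //.
apply: (uniq_min_size _ _ _).2; rewrite ?map_inj_uniq ?size_map //.
by move=> y /mapP [x xs ->]; apply: fs.
Qed.

Lemma Tp_shift s b : perm_eq (map (fun nu => b + nu) s) s ->
  Tp s \Po lin 1 b = Tp s.
Proof.
move=> pe; rewrite Tp_comp_lin.
transitivity (\prod_(mu <- map (fun nu => b + nu) s) ('X + mu%:P)).
  by rewrite big_map; apply: eq_bigr => nu _; rewrite linX.
exact: perm_big.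
Qed.

Lemma transl_inv s : uniq s -> 0 \in s ->
  (forall b, b \in s -> Tp s \Po lin 1 b = Tp s) ->
  forall g, (forall b, b \in s -> g \Po lin 1 b = g) ->
  exists q, g = q \Po Tp s.
Proof.
move=> us s0 HT g.
move: {2}(size g) (leqnn (size g)) => n; elim: n g => [|n IH] g hg Hg.
  move: hg; rewrite leqn0 size_poly_eq0 => /eqP ->.
  by exists 0; rewrite comp_poly0.
set t := Tp s.
have tn0 : t != 0 by rewrite -size_poly_eq0 size_Tp.
have ss : (0 < size s)%N by case: (s) s0.
set q := g %/ t; set r := g %% t.
have sr : (size r < size t)%N by rewrite ltn_modp.
have inv : forall b, b \in s -> q \Po lin 1 b = q /\ r \Po lin 1 b = r.
  move=> b bs.
  have E : g = (q \Po lin 1 b) * t + (r \Po lin 1 b).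
    by rewrite -{1}(Hg b bs) {1}(divp_eq g t) comp_polyD comp_polyM HT.
  have := divp_modpP E; rewrite size_comp_poly2 ?size_lin ?oner_neq0 //.
  by case/(_ sr) => -> ->.
have rc : r = (r.[0])%:P.
  apply/eqP; rewrite -subr_eq0; apply/eqP; apply/eqP/negPn/negP => r0.
  have hall : all (root (r - (r.[0])%:P)) s.
    apply/allP => nu nus; rewrite /root hornerD hornerN hornerC subr_eq0.
    by rewrite -{2}(inv nu nus).2 horner_comp horner_lin mulr0 add0r.
  have := max_poly_roots r0 hall us; apply/negP; rewrite -leqNgt.
  apply: leq_trans (size_polyD _ _) _; rewrite size_polyN geq_max.
  move: sr; rewrite /t size_Tp ltnS => -> /=.
  by apply: leq_trans (size_polyC_leq1 _) _.
have [q1 eq1] : exists q1, q = q1 \Po t.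
  apply: IH => [|b bs]; last by case: (inv b bs).
  rewrite /q size_divp // size_Tp /=. rewrite leq_subLR; apply: leq_trans hg _; by rewrite addnC -addn1 leq_add2l.
exists (q1 * 'X + (r.[0])%:P).
by rewrite comp_poly_MXaddC -eq1 -rc; apply: divp_eq.
Qed.


Lemma coef_comp_linZ p a i : (p \Po lin a 0)`_i = a ^+ i * p`_i.
Proof.
rewrite -linZ coef_comp_poly; case: (ltnP i (size p)) => hi.
  rewrite (bigD1 (Ordinal hi)) //= big1 ?addr0.
    by rewrite exprZn coefZ coefXn eqxx mulr1 mulrC.
  move=> j hj; rewrite exprZn coefZ coefXn; case: eqP => [ij|]; last first.
    by rewrite !mulr0.
  by case/eqP: hj; apply: val_inj.
rewrite nth_default // mulr0 big1 // => j _.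
rewrite exprZn coefZ coefXn; case: eqP => [ij|]; last by rewrite !mulr0.
by move: (ltn_ord j); rewrite -ij ltnNge hi.
Qed.

Lemma Tp_coef1 s : uniq s -> 0 \in s -> (Tp s)`_1 != 0.
Proof.
move=> us s0; rewrite /Tp (perm_big _ (perm_to_rem s0)) big_cons polyC0 addr0.
rewrite coefXM /= -horner_coef0 horner_prod prodf_seq_neq0.
apply/allP => nu; rewrite mem_rem_uniq // inE => /andP [nu0 _] /=.
by rewrite hornerD hornerX hornerC add0r.
Qed.

Lemma T_scale s al : perm_eq (map (fun nu => al * nu) s) s ->
  Tp s \Po lin al 0 = al ^+ size s *: Tp s.
Proof.
move=> pe; rewrite Tp_comp_lin /Tp -prod_scale.
have -> : \prod_(i <- s) (al *: ('X + i%:P)) =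
   \prod_(mu <- map (fun nu => al * nu) s) lin al mu.
  by rewrite big_map; apply: eq_bigr => nu _; rewrite /lin scalerDr scale_polyC.
by rewrite (perm_big _ pe); apply: eq_bigr => nu _; rewrite add0r.
Qed.

Lemma al_pow s al : uniq s -> 0 \in s ->
  Tp s \Po lin al 0 = al ^+ size s *: Tp s -> al ^+ size s = al.
Proof.
move=> us s0 E; have := congr1 (fun p => p`_1) E.
rewrite coef_comp_linZ coefZ expr1 => /(mulIf (Tp_coef1 us s0)).
by move/esym.
Qed.

Lemma comp_inj p q (U : {poly F}) : (1 < size U)%N -> p \Po U = q \Po U -> p = q.
Proof.
move=> sU E; apply/eqP; rewrite -subr_eq0 -lead_coef_eq0.
have : lead_coef ((p - q) \Po U) = 0 by rewrite comp_polyB E subrr lead_coef0.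
rewrite lead_coef_comp // => /eqP; rewrite mulf_eq0 expf_eq0.
case/orP => // /andP [_] /eqP hU0.
have U0 : U = 0 by apply/eqP; rewrite -lead_coef_eq0 hU0.
by move: sU; rewrite U0 size_poly0.
Qed.

Lemma Xl_factor q al l : l.-primitive_root al -> (0 < l)%N ->
  q \Po lin al 0 = q -> exists r, q = r \Po 'X^l.
Proof.
move=> prim l0 E.
have Hq : forall i, q`_i != 0 -> (l %| i)%N.
  move=> i qi; have := congr1 (fun p => p`_i) E; rewrite coef_comp_linZ => e.
  have : (al ^+ i - 1) * q`_i = 0 by rewrite mulrBl e mul1r subrr.
  by move/eqP; rewrite mulf_eq0 (negbTE qi) orbF subr_eq0 -(prim_order_dvd prim).
exists (\poly_(j < size q) q`_(j * l)); apply/polyP => i.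
rewrite coef_comp_poly_Xn // coef_poly.
case: ifP => dvd; last by apply/eqP; apply: (contraFT (Hq i) dvd).
case: ltnP => hs; first by rewrite divnK.
rewrite nth_default //; apply: leq_trans hs _.
by rewrite -{2}(divnK dvd) leq_pmulr.
Qed.
End P.

Lemma apowE (F : fieldType) (al be : F) k : al != 1 ->
  apow (al, be) k = (al ^+ k, be / (al - 1) * (al ^+ k - 1)).
Proof.
move=> al1; have a1 : al - 1 != 0 by rewrite subr_eq0.
set c := be / (al - 1); have hc : be = c * (al - 1) by rewrite /c divfK.
elim: k => [|k IH]; first by rewrite /apow /= expr0 subrr mulr0.
rewrite /apow iterS -/(apow _ k) IH /acomp /= exprS; congr (_, _).
rewrite {1}hc; ring.
Qed.

Lemma infinite_list (F : fieldType) : ~ (exists s : seq F, forall c : F, c \in s) ->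
  forall n, exists s : seq F, [/\ uniq s, size s = n & 0 \notin s].
Proof.
move=> Hinf; elim=> [|n [s [us ss s0]]]; first by exists [::].
have [c cn] : exists c, c \notin (0 :: s).
  apply: NNPP => H; apply: Hinf; exists (0 :: s) => c.
  by apply: NNPP => hc; apply: H; exists c; apply/negP.
move: cn; rewrite inE negb_or => /andP [c0 cs].
by exists (c :: s); split; rewrite /= ?cs ?us ?ss // inE negb_or eq_sym c0.
Qed.

Theorem theorem8p9 (F : fieldType) (h : {poly F}) :
  (1 < size h)%N ->
  (* A_h^A = F[x]^A *)
  (forall a : AH F, fixedA h a <-> exists g : {poly F}, a = g%:P /\ fixedA h g%:P) /\
  (* (i), first part: A = {phi_f} *)
  ((forall al be, inP h al be -> al = 1 /\ be = 0) ->
     forall g : {poly F}, fixedA h g%:P) /\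
  (* (i), second part: h = gamma (x - lambda)^n, F infinite *)
  (forall (ga la : F) (n : nat), h = ga *: ('X - la%:P) ^+ n ->
     ~ (exists s : seq F, forall c : F, c \in s) ->
     forall g : {poly F}, fixedA h g%:P <-> exists c : F, g = c%:P) /\
  (* (ii): s enumerates G = {nu : (1,nu) in P} *)
  (forall s : seq F, uniq s -> (forall nu, nu \in s <-> inP h 1 nu) ->
     ((* (a) tau_P = tau_{1,G} *)
      (forall al be, inP h al be -> al = 1) ->
      forall g : {poly F}, fixedA h g%:P <->
        exists q : {poly F}, g = q \Po \prod_(nu <- s) ('X + nu%:P)) /\
     ((* (b) tau_P = tau_{1,G} ⋊ <tau_{alpha,beta}>, alpha primitive l-th root *)
      forall (al be : F) (l : nat), inP h al be -> (1 < l)%N ->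
      l.-primitive_root al ->
      (forall a b, inP h a b ->
         exists k nu, nu \in s /\ (a, b) = acomp (apow (al, be) k) (1, nu)) ->
      forall g : {poly F}, fixedA h g%:P <->
        exists q : {poly F},
          g = q \Po \prod_(nu <- s) ('X + (be / (al - 1) + nu)%:P) ^+ l)).
Proof.
move=> hsz; split; [|split; [|split]].
- move=> a; split=> [fa|[g [-> //]]].
  have sa := @fixed_size F h a fa.1; exists a`_0; split; first exact: size1_polyC.
  by rewrite -(size1_polyC sa).
- move=> H g; apply/fixedC => al be /H [-> ->].
  by change (g \Po lin 1 0 = g); rewrite comp_lin10.
- move=> ga la n Eh Finf g; rewrite fixedC; split; last first.
    by move=> [c ->] al be _; rewrite comp_polyC.
  move=> H.
  have ga0 : ga != 0 by apply: contraTneq hsz => ga0; rewrite Eh ga0 scale0r size_poly0.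
  have key : forall al, al != 0 -> g \Po lin al (la - al * la) = g.
    move=> al a0; apply: H; rewrite /inP a0 /=.
    change (h \Po lin al (la - al * la) == al ^+ (size h).-1 *: h).
    rewrite Eh size_scale // size_exp_XsubC /= comp_polyZ comp_exp.
    have -> : ('X - la%:P) \Po lin al (la - al * la) = al *: ('X - la%:P).
      rewrite comp_polyB comp_polyX comp_polyC /lin scalerBr scale_polyC polyCB.
      by rewrite addrA addrAC addrK.
    by rewrite exprZn scalerA mulrC -scalerA.
  have : (size g <= 1)%N.
    rewrite leqNgt; apply/negP => sg.
    have root1 : forall al : F, al != 0 -> al ^+ (size g).-1 = 1.
      move=> al a0; have := congr1 lead_coef (key al a0).
      rewrite lead_coef_comp ?size_lin // lead_lin //.
      have lg : lead_coef g != 0 by rewrite lead_coef_eq0 -size_poly_eq0; case: (size g) sg.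
      by rewrite -{2}[lead_coef g]mulr1 => /(mulfI lg).
    set d := (size g).-1.
    have d0 : (0 < d)%N by rewrite /d; case: (size g) sg => [|[]].
    have [s [us ss s0]] := @infinite_list F Finf d.+1.
    have hall : all (root ('X^d - 1)) s.
      apply/allP => x xs; rewrite /root hornerD hornerN hornerXn hornerC.
      rewrite root1 ?subrr //; by apply: contraNneq s0 => <-.
    have pn0 : ('X^d - 1 : {poly F}) != 0.
      by rewrite -size_poly_eq0 size_Xn_sub_1.
    by have := max_poly_roots pn0 hall us; rewrite size_Xn_sub_1 // ss ltnn.
  by move/size1_polyC => ->; exists g`_0.
move=> s us Hs.
have hsP : forall nu, nu \in s <-> h \Po lin 1 nu = h.
  move=> nu; rewrite Hs /inP oner_neq0 /= expr1n [_ *: h]scale1r.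
  by split => /eqP.
have s0 : 0 \in s by apply/hsP; rewrite comp_lin10.
have cl : forall a b, a \in s -> b \in s -> b + a \in s.
  move=> a b /hsP ha /hsP hb; apply/hsP.
  have -> : lin 1 (b + a) = lin 1 a \Po lin 1 b by rewrite lin_comp !mul1r.
  by rewrite comp_polyA ha hb.
have HT : forall b, b \in s -> Tp s \Po lin 1 b = Tp s.
  move=> b bs; apply: Tp_shift; apply: perm_map_sub us (addrI b) _.
  by move=> x xs; rewrite addrC; apply: cl.
split.
  move=> Hal g; rewrite fixedC; split.
    move=> H; have [q qE] : exists q, g = q \Po Tp s.
      by apply: (transl_inv us s0 HT) => b bs; apply: H; apply/Hs.
    by exists q.
  move=> [q ->] al be hP; have al1 := Hal _ _ hP; subst al.
  have bs : be \in s by apply/Hs.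
  by change ((q \Po Tp s) \Po lin 1 be = q \Po Tp s); rewrite -comp_polyA HT.
move=> al be l hP l1 prim Hgen g.
have al0 : al != 0 by case/andP: hP.
have hPe : h \Po lin al be = al ^+ (size h).-1 *: h by case/andP: hP => _ /eqP.
have al1 : al != 1.
  apply/eqP => e; move: (prim_order_dvd prim 1); rewrite e expr1 eqxx.
  by rewrite dvdn1 => /eqP l1'; rewrite l1' in l1.
have am1 : al - 1 != 0 by rewrite subr_eq0.
have stab : forall nu, nu \in s -> al * nu \in s.
  move=> nu /hsP hn; apply/hsP; apply: (lin_cancel (b:=be) al0).
  rewrite -comp_polyA lin_comp mul1r mul1r.
  have -> : lin al (be + al * nu) = lin al be \Po lin 1 nu.
    by rewrite lin_comp mulr1 addrC.
  by rewrite comp_polyA hPe comp_polyZ hn.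
have pal : perm_eq (map (fun nu => al * nu) s) s.
  by apply: perm_map_sub us (mulfI al0) _ => x xs; apply: stab.
have Tal : Tp s \Po lin al 0 = al *: Tp s.
  by rewrite (T_scale pal) (al_pow us s0 (T_scale pal)).
have Talk : forall k, Tp s \Po lin (al ^+ k) 0 = al ^+ k *: Tp s.
  elim=> [|k IH]; first by rewrite expr0 comp_lin10 scale1r.
  have -> : lin (al ^+ k.+1) 0 = lin al 0 \Po lin (al ^+ k) 0.
    by rewrite lin_comp mulr0 addr0 exprS.
  by rewrite comp_polyA Tal comp_polyZ IH scalerA exprS.
rewrite fixedC prodrXl.
set c := be / (al - 1).
have hc : c * (al - 1) = be by rewrite /c divfK.
have UE : \prod_(nu <- s) ('X + (c + nu)%:P) = Tp s \Po lin 1 c.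
  by rewrite Tp_comp_lin; apply: eq_bigr => nu _; rewrite linX.
rewrite UE; set U := Tp s \Po lin 1 c.
have key : forall k nu, nu \in s ->
    U \Po lin (al ^+ k) (c * (al ^+ k - 1) + nu) = al ^+ k *: U.
  move=> k nu nus; set a := al ^+ k.
  have e1 : lin 1 c \Po lin a (c * (a - 1) + nu) = lin 1 nu \Po lin a (a * c).
    rewrite !lin_comp !mul1r; congr lin.
    by rewrite mulrBr mulr1 mulrC addrAC subrK addrC.
  have e2 : lin a 0 \Po lin 1 c = lin a (a * c).
    by rewrite lin_comp mulr1 addr0.
  rewrite /U -comp_polyA e1 comp_polyA (HT nu nus) -e2 comp_polyA Talk.
  by rewrite comp_polyZ.
split.
  move=> H.
  have Hinv : forall nu, nu \in s -> g \Po lin 1 nu = g.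
    by move=> nu nus; apply: H; apply/Hs.
  have Hsig : g \Po lin al be = g by apply: H.
  set gt := g \Po lin 1 (- c).
  have [q eq] : exists q, gt = q \Po Tp s.
    apply: (transl_inv us s0 HT) => nu nus.
    rewrite /gt -comp_polyA.
    have -> : lin 1 (- c) \Po lin 1 nu = lin 1 nu \Po lin 1 (- c).
      by rewrite !lin_comp !mul1r addrC.
    by rewrite comp_polyA (Hinv nu nus).
  have gE : g = q \Po U.
    rewrite /U comp_polyA -eq /gt -comp_polyA lin_comp !mul1r subrr.
    by rewrite comp_lin10.
  have sU : (1 < size U)%N.
    by rewrite /U size_comp_poly2 ?size_lin ?oner_neq0 // size_Tp ltnS; case: (s) s0.
  have qinv : q \Po lin al 0 = q.
    apply: (comp_inj sU).
    have := key 1%N 0 s0; rewrite expr1 addr0 hc => kU.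
    rewrite -comp_polyA.
    have -> : lin al 0 \Po U = al *: U.
      by rewrite /lin comp_polyD comp_polyZ comp_polyX comp_polyC addr0.
    by rewrite -kU comp_polyA -gE Hsig.
  have [r rE] := Xl_factor prim (ltnW l1) qinv.
  by exists r; rewrite gE rE -comp_polyA comp_Xn_poly.
move=> [r ->] a b hab.
have [k [nu [nus e]]] := Hgen a b hab.
move: e; rewrite apowE // /acomp /= mulr1 mul1r; case=> -> ->.
change ((r \Po U ^+ l) \Po lin (al ^+ k) (c * (al ^+ k - 1) + nu) = r \Po U ^+ l).
rewrite -comp_polyA comp_exp key // exprZn -exprM mulnC exprM.
by rewrite (prim_expr_order prim) expr1n scale1r.
Qed.
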